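(* Let $G$ be a simple undirected graph on $\{1,\dots,n\}$ ($n\ge2$) with adjacency $g_{ij}$ ($g_{ii}=0$) and $m$ edges. Suppose the potential outcomes are $Y_i(\mathbf z)=\alpha_i+\beta_iz_i+\gamma\sum_jg_{ij}z_j$ for constants $\alpha_i,\beta_i,\gamma$. Under a completely randomized design with $n_t$ treated units, $1\le n_t\le n-1$, the estimator $$\hat\beta_{naive}=\frac{\sum_i Y_i^{obs}Z_i}{\sum_i Z_i}-\frac{\sum_i Y_i^{obs}(1-Z_i)}{\sum_i(1-Z_i)}$$ satisfies $\mathbb E[\hat\beta_{naive}]-\mathrm{DTE}=-\gamma\frac{2m}{n(n-1)}$, where $\mathrm{DTE}=\frac1n\sum_i\beta_i$ is the direct treatment effect (the average of $Y_i$ with unit $i$ treated and no neighbor treated minus $Y_i$ with no unit treated).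
   Context: Completely randomized design: $\mathbf Z$ is uniform over vectors in $\{0,1\}^n$ with exactly $n_t$ ones. $Y_i^{obs}=Y_i(\mathbf Z)$. *)

(* Defs.v *)
From HB Require Import structures.
From mathcomp Require Import all_boot all_order all_algebra.
Set Implicit Arguments. Unset Strict Implicit. Unset Printing Implicit Defensive.
Import Order.TTheory GRing.Theory Num.Theory.
Local Open Scope ring_scope.

(* Treatment assignments: z : {ffun 'I_n -> bool}, z i = true iff unit i treated. *)

Definition simple_graph (n : nat) (g : 'I_n -> 'I_n -> bool) : Prop :=
  (forall i, g i i = false) /\ (forall i j, g i j = g j i).

Definition num_edges (n : nat) (g : 'I_n -> 'I_n -> bool) : nat :=
  #|[set p : 'I_n * 'I_n | (p.1 < p.2)%N && g p.1 p.2]|.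

Definition crd_support (n nt : nat) : {set {ffun 'I_n -> bool}} :=
  [set z : {ffun 'I_n -> bool} | #|[set i | z i]| == nt].

Definition crd_expect (R : fieldType) (n nt : nat)
    (X : {ffun 'I_n -> bool} -> R) : R :=
  (\sum_(z in crd_support n nt) X z) / #|crd_support n nt|%:R.

Definition Yobs (R : Type) (n : nat) (Y : 'I_n -> {ffun 'I_n -> bool} -> R)
    (z : {ffun 'I_n -> bool}) (i : 'I_n) : R := Y i z.

Definition beta_naive (R : fieldType) (n : nat)
    (Y : 'I_n -> {ffun 'I_n -> bool} -> R) (z : {ffun 'I_n -> bool}) : R :=
  (\sum_i Yobs Y z i * (z i)%:R) / (\sum_i (z i)%:R)
  - (\sum_i Yobs Y z i * (1 - (z i)%:R)) / (\sum_i (1 - (z i)%:R)).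

Definition only_treated (n : nat) (i : 'I_n) : {ffun 'I_n -> bool} :=
  [ffun j => j == i].
Definition none_treated (n : nat) : {ffun 'I_n -> bool} := [ffun _ => false].

Definition DTE (R : fieldType) (n : nat)
    (Y : 'I_n -> {ffun 'I_n -> bool} -> R) : R :=
  (\sum_i (Y i (only_treated i) - Y i (none_treated n))) / n%:R.

(* Main.v *)
Require Import Defs.
From HB Require Import structures.
From mathcomp Require Import all_boot all_order all_algebra all_fingroup.
From mathcomp Require Import ring.
Set Implicit Arguments. Unset Strict Implicit. Unset Printing Implicit Defensive.
Import Order.TTheory GRing.Theory Num.Theory.
Local Open Scope ring_scope.

Lemma sym_sum (R : realFieldType) n nt (a b : 'I_n) (F : {ffun 'I_n -> bool} -> R) :
  \sum_(z in crd_support n nt) F z =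
  \sum_(z in crd_support n nt) F [ffun x => z (tperm a b x)].
Proof.
pose h (z : {ffun 'I_n -> bool}) := [ffun x => z (tperm a b x)].
have hK : involutive h.
  by move=> z; apply/ffunP => x; rewrite !ffunE tpermK.
rewrite (reindex_inj (inv_inj hK)) /=; apply: eq_bigl => z.
rewrite !inE.
have -> : [set i | h z i] = tperm a b @^-1: [set i | z i].
  by apply/setP => x; rewrite !inE ffunE.
by rewrite card_preimset //; apply: perm_inj.
Qed.

Lemma b2K (R : realFieldType) (b : bool) : (b%:R : R) * b%:R = b%:R.
Proof. by case: b; rewrite ?mulr1 ?mulr0. Qed.

Lemma b2C (R : realFieldType) (b : bool) : (b%:R : R) * (1 - b%:R) = 0.
Proof. by case: b; rewrite ?subrr ?mulr0 ?mul0r. Qed.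

Lemma sum_z (R : realFieldType) n (z : {ffun 'I_n -> bool}) :
  \sum_i ((z i)%:R : R) = #|[set i | z i]|%:R.
Proof.
rewrite -natr_sum; congr (_%:R).
rewrite -sum1_card [RHS]big_mkcond /=; apply: eq_bigr => i _; rewrite inE.
by case: (z i).
Qed.

Lemma supp_nonempty n nt : (nt <= n)%N -> (0 < #|crd_support n nt|)%N.
Proof.
move=> le; apply/card_gt0P.
exists [ffun x : 'I_n => (x < nt)%N]; rewrite inE.
have -> : [set i | [ffun x : 'I_n => (x < nt)%N] i] = [set widen_ord le x | x : 'I_nt].
  apply/setP => x; rewrite inE ffunE; apply/idP/imsetP.
    by move=> lt; exists (Ordinal lt) => //; apply: val_inj.
  by case=> y _ ->; rewrite /= ltn_ord.
rewrite card_imset ?card_ord //.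
by move=> x y /(congr1 val) /= /val_inj.
Qed.
Section S.
Variables (R : realFieldType) (n nt : nat).
Local Notation S := (crd_support n nt).
Local Notation N := (#|crd_support n nt|%:R : R).
Definition P1 (i : 'I_n) : R := \sum_(z in S) (z i)%:R.
Definition P2 (i j : 'I_n) : R := \sum_(z in S) (z i)%:R * (z j)%:R.

Lemma sumP1 : \sum_k P1 k = nt%:R * N.
Proof.
rewrite /P1 exchange_big /= (eq_bigr (fun _ => (nt%:R : R))).
  by rewrite sumr_const mulr_natr.
by move=> z; rewrite /crd_support inE sum_z => /eqP ->.
Qed.

Lemma P1_const i : n%:R * P1 i = nt%:R * N.
Proof.
have e : forall j, P1 j = P1 i.
  move=> j; rewrite /P1 (@sym_sum R n nt j i); apply: eq_bigr => z _.
  by rewrite ffunE tpermL.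
rewrite -sumP1 (eq_bigr (fun _ => P1 i)) // sumr_const card_ord.
by rewrite mulr_natl.
Qed.

Lemma P2_perm a b i j : P2 i j = P2 (tperm a b i) (tperm a b j).
Proof. by rewrite /P2 (@sym_sum R n nt a b); apply: eq_bigr => z _; rewrite !ffunE. Qed.

Lemma P2_const i j k l : i != j -> k != l -> P2 i j = P2 k l.
Proof.
move=> ij kl.
rewrite (P2_perm i k) tpermL.
set j' := tperm i k j.
have j'k : j' != k.
  by rewrite /j' -{2}(tpermL i k) (inj_eq perm_inj) eq_sym.
rewrite (P2_perm j' l) tpermL tpermD // eq_sym //.
Qed.

Lemma P2_sum i0 j0 : i0 != j0 ->
  n%:R * (n%:R - 1) * P2 i0 j0 = nt%:R * (nt%:R - 1) * N.
Proof.
move=> ij.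
have h1 : \sum_k \sum_l P2 k l = nt%:R * nt%:R * N.
  rewrite /P2.
  under eq_bigr do rewrite exchange_big /=.
  rewrite exchange_big /= (eq_bigr (fun _ => (nt%:R * nt%:R : R))).
    by rewrite sumr_const [RHS]mulr_natr.
  move=> z; rewrite /crd_support inE => /eqP hz.
  rewrite -hz -sum_z mulr_suml; apply: eq_bigr => k _.
  by rewrite mulr_sumr.
have h2 : \sum_k \sum_l P2 k l = nt%:R * N + n%:R * (n%:R - 1) * P2 i0 j0.
  rewrite -sumP1 (eq_bigr (fun k => P1 k + (n%:R - 1) * P2 i0 j0)).
    by rewrite big_split /= sumr_const card_ord -mulrA mulr_natl.
  move=> k _; rewrite (bigD1 k) //=; congr (_ + _).
    by rewrite /P2 /P1; apply: eq_bigr => z _; rewrite b2K.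
  rewrite (eq_bigr (fun _ => P2 i0 j0)).
    have n0 : (0 < n)%N by apply: leq_ltn_trans (leq0n k) (ltn_ord k).
    have -> : (n%:R - 1 : R) = (n - 1)%:R by rewrite natrB.
    by rewrite sumr_const cardC1 card_ord -subn1 mulr_natl.
  by move=> l lk; apply: P2_const; rewrite // eq_sym.
have := h1; rewrite h2 => e.
have -> : n%:R * (n%:R - 1) * P2 i0 j0 = nt%:R * nt%:R * N - nt%:R * N
  by rewrite -e; ring.
ring.
Qed.
End S.

Lemma sumb (T : finType) (P : pred T) : (\sum_(x : T) (P x : nat) = #|[set x | P x]|)%N.
Proof.
rewrite -sum1_card [RHS]big_mkcond /=; apply: eq_bigr => x _; rewrite inE.
by case: (P x).
Qed.

Lemma edge_sum (R : realFieldType) n (g : 'I_n -> 'I_n -> bool) :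
  simple_graph g ->
  \sum_i \sum_j ((g i j)%:R : R) = (2 * num_edges g)%:R.
Proof.
case=> gii gs.
have -> : \sum_i \sum_j ((g i j)%:R : R) = (\sum_i \sum_j (g i j : nat))%:R.
  by rewrite natr_sum; apply: eq_bigr => i _; rewrite natr_sum.
congr (_%:R).
rewrite pair_big /=.
rewrite (eq_bigr (fun p : 'I_n * 'I_n => ((p.1 < p.2)%N && g p.1 p.2) + ((p.2 < p.1)%N && g p.1 p.2)))%N; last first.
  case=> i j _ /=.
  case: (ltngtP i j) => [h|h|/val_inj ->]; first by case: (g i j).
    by case: (g i j).
  by rewrite gii.
rewrite big_split /= mul2n -addnn; congr (_ + _)%N.
  by rewrite sumb.
rewrite (reindex_inj (h := fun p : 'I_n * 'I_n => (p.2, p.1))) /=; last first.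
  by case=> a b [c d] /= [-> ->].
rewrite /num_edges -sumb.
by apply: eq_bigr => -[a b] _ /=; rewrite gs.
Qed.

Theorem proposition12 (R : realFieldType) (n nt : nat)
    (g : 'I_n -> 'I_n -> bool)
    (alpha beta : 'I_n -> R) (gamma : R)
    (Y : 'I_n -> {ffun 'I_n -> bool} -> R) :
  (2 <= n)%N ->
  simple_graph g ->
  (forall i z, Y i z = alpha i + beta i * (z i)%:R
                       + gamma * \sum_j (g i j)%:R * (z j)%:R) ->
  (1 <= nt)%N -> (nt <= n - 1)%N ->
  crd_expect nt (beta_naive Y) - DTE Y
    = - gamma * ((2 * num_edges g)%:R / (n * (n - 1))%:R).
Proof.
move=> n2 sg HY nt1 ntn.
have gii : forall i, g i i = false by case: sg.
have ntn' : (nt < n)%N by rewrite (leq_ltn_trans ntn) // subn1 prednK // (ltn_trans _ n2).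
have n0 : (0 < n)%N by apply: ltn_trans n2.
set N := (#|crd_support n nt|%:R : R).
have N0 : N != 0 by rewrite pnatr_eq0 -lt0n supp_nonempty // ltnW.
have nR0 : (n%:R : R) != 0 by rewrite pnatr_eq0 -lt0n.
have ntR0 : (nt%:R : R) != 0 by rewrite pnatr_eq0 -lt0n.
have n1R0 : (n%:R - 1 : R) != 0.
  have h : ((n - 1)%:R : R) != 0 by rewrite pnatr_eq0 -lt0n subn_gt0.
  by move: h; rewrite natrB.
have nntR0 : (n%:R - nt%:R : R) != 0.
  by rewrite -natrB ?pnatr_eq0 -?lt0n ?subn_gt0 // ltnW.
pose i0 : 'I_n := Ordinal n0.
pose j0 : 'I_n := Ordinal n2.
have ij0 : i0 != j0 by [].
set c2 := P2 R nt i0 j0.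
have c2E : c2 = nt%:R * (nt%:R - 1) * N / (n%:R * (n%:R - 1)).
  rewrite -(P2_sum R nt ij0) -/c2; field; by rewrite nR0 n1R0.
set c1 := nt%:R * N / n%:R.
have P1E : forall i : 'I_n, P1 R nt i = c1.
  by move=> i; rewrite /c1 -(P1_const R nt i) -/N; field.
have P2E : forall i j : 'I_n, i != j -> P2 R nt i j = c2.
  by move=> i j ij; apply: P2_const.
pose d i := \sum_j ((g i j)%:R : R).
have T1 : forall i, \sum_(z in crd_support n nt) Y i z * (z i)%:R
    = (alpha i + beta i) * c1 + d i * (gamma * c2).
  move=> i.
  rewrite (eq_bigr (fun z : {ffun 'I_n -> bool} => alpha i * (z i)%:R + beta i * (z i)%:R
       + gamma * \sum_j (g i j)%:R * ((z j)%:R * (z i)%:R))); last first.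
    move=> z _.
    have -> : \sum_j ((g i j)%:R : R) * ((z j)%:R * (z i)%:R)
        = (\sum_j (g i j)%:R * (z j)%:R) * (z i)%:R.
      by rewrite mulr_suml; apply: eq_bigr => j _; rewrite mulrA.
    by rewrite HY; case: (z i) => /=; ring.
  rewrite !big_split /= -!mulr_sumr.
  rewrite exchange_big /=.
  under [X in gamma * X]eq_bigr do rewrite -mulr_sumr.
  rewrite -/(P1 R nt i) P1E.
  rewrite (eq_bigr (fun j => (g i j)%:R * c2)); last first.
    move=> j _; case ge: (g i j); last by rewrite !mul0r.
    rewrite -/(P2 R nt j i) P2E //; apply/eqP => ji; by rewrite ji gii in ge.
  by rewrite -mulr_suml /d; ring.
have T2 : forall i, \sum_(z in crd_support n nt) Y i z * (1 - (z i)%:R)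
    = alpha i * (N - c1) + d i * (gamma * (c1 - c2)).
  move=> i.
  rewrite (eq_bigr (fun z : {ffun 'I_n -> bool} => alpha i * 1 - alpha i * (z i)%:R
       + gamma * \sum_j (g i j)%:R * ((z j)%:R - (z j)%:R * (z i)%:R))); last first.
    move=> z _.
    have -> : \sum_j ((g i j)%:R : R) * ((z j)%:R - (z j)%:R * (z i)%:R)
        = (\sum_j (g i j)%:R * (z j)%:R) * (1 - (z i)%:R).
      by rewrite mulr_suml; apply: eq_bigr => j _; ring.
    by rewrite HY; case: (z i) => /=; ring.
  rewrite !big_split /= sumrN -!mulr_sumr sumr_const -/N -/(P1 R nt i) P1E.
  rewrite exchange_big /=.
  under [X in gamma * X]eq_bigr do rewrite -mulr_sumr sumrB.
  rewrite (eq_bigr (fun j => (g i j)%:R * (c1 - c2))); last first.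
    move=> j _; case ge: (g i j); last by rewrite !mul0r.
    rewrite -/(P2 R nt j i) P2E; last by apply/eqP => ji; rewrite ji gii in ge.
    by rewrite -/(P1 R nt j) P1E.
  by rewrite -mulr_suml /d; ring.
have DTEE : DTE Y = (\sum_i beta i) / n%:R.
  rewrite /DTE; congr (_ / _); apply: eq_bigr => i _.
  rewrite !HY /only_treated /none_treated !ffunE eqxx.
  have s0 : \sum_j ((g i j)%:R : R) * ([ffun j0 => j0 == i] j)%:R = 0.
    apply: big1 => j _; rewrite ffunE.
    by case: eqP => [->|_]; rewrite ?gii ?mulr0 ?mul0r.
  have s1 : \sum_j ((g i j)%:R : R) * ([ffun=> false] j)%:R = 0.
    by apply: big1 => j _; rewrite ffunE mulr0.
  rewrite s0 s1 /=; ring.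
have BN : forall z, z \in crd_support n nt -> beta_naive Y z
    = (\sum_i Y i z * (z i)%:R) / nt%:R
      - (\sum_i Y i z * (1 - (z i)%:R)) / (n%:R - nt%:R).
  move=> z; rewrite /crd_support inE => /eqP hz.
  rewrite /beta_naive /Yobs sum_z hz; congr (_ - _ / _).
  by rewrite sumrB sumr_const card_ord sum_z hz.
rewrite /crd_expect -/N (eq_bigr _ BN) sumrB -!mulr_suml.
rewrite DTEE exchange_big [X in (_ - X / _) / _]exchange_big /=.
rewrite (eq_bigr _ (fun i _ => T1 i)) (eq_bigr _ (fun i _ => T2 i)).
rewrite !big_split /= -!mulr_suml big_split /=.
have hD : \sum_i d i = (2 * num_edges g)%:R := edge_sum R sg.
rewrite -hD natrM natrB // c2E /c1.
move: (\sum_i d i) (\sum_i alpha i) (\sum_i beta i) => D A B.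
field.
by rewrite n1R0 nR0 N0 nntR0 ntR0.
Qed.
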